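(* For positive integers $f,d$ with $f\mid d$, we have $R_q(d)\ge R_q(f)$.
   Context: Let $\mathbb{F}_q$ be a finite field. For a positive integer $d$, let $\mathbf{E}_d$ be the elliptic curve $y^2+xy=x^3-t^d$ over $\mathbb{F}_q(t)$ and $R_q(d)$ the rank of the Mordell–Weil group $\mathbf{E}_d(\mathbb{F}_q(t))$. *)

(* Defs.v *)
From HB Require Import structures.
From mathcomp Require Import all_boot all_order all_algebra all_field.
From mathcomp Require Import fraction.
Set Implicit Arguments. Unset Strict Implicit. Unset Printing Implicit Defensive.
Import GRing.Theory.
Local Open Scope ring_scope.

Definition ratfun (F : fieldType) := {fraction {poly F}}.

Definition tvar (F : fieldType) : ratfun F := FracField.tofrac 'X.

Section WeierstrassE.
Variables (F : fieldType) (d : nat).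
Local Notation K := (ratfun F).

(* E_d : y^2 + x y = x^3 - t^d, i.e. the general Weierstrass equation
   y^2 + a1 x y + a3 y = x^3 + a2 x^2 + a4 x + a6 with
   a1 = 1, a3 = 0, a2 = 0, a4 = 0, a6 = - t^d. *)
Definition a6 : K := - (tvar F) ^+ d.

(* Points of E_d over K: None is the point at infinity O, Some (x,y) an
   affine point. *)
Definition on_curve (P : option (K * K)) : Prop :=
  match P with
  | None => True
  | Some (x, y) => y ^+ 2 + x * y = x ^+ 3 + a6
  end.

(* Group law (chord-tangent), Silverman III.2.3 with a1 = 1, a2=a3=a4=0. *)
Definition ec_neg (P : option (K * K)) : option (K * K) :=
  match P with
  | None => None
  | Some (x, y) => Some (x, - y - x)
  end.

Definition ec_add (P Q : option (K * K)) : option (K * K) :=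
  match P, Q with
  | None, _ => Q
  | _, None => P
  | Some (x1, y1), Some (x2, y2) =>
      if (x1 == x2) && (y1 + y2 + x2 == 0) then None
      else
        let lam := if x1 != x2 then (y2 - y1) / (x2 - x1)
                   else (3%:R * x1 ^+ 2 - y1) / (2%:R * y1 + x1) in
        let nu := if x1 != x2 then (y1 * x2 - y2 * x1) / (x2 - x1)
                  else (- x1 ^+ 3 + 2%:R * a6) / (2%:R * y1 + x1) in
        let x3 := lam ^+ 2 + lam - x1 - x2 in
        Some (x3, - (lam + 1) * x3 - nu)
  end.

Definition ec_mul (n : int) (P : option (K * K)) : option (K * K) :=
  match n with
  | Posz m => iter m (ec_add P) None
  | Negz m => ec_neg (iter m.+1 (ec_add P) None)
  end.

Definition ec_lincomb (n : nat) (c : 'I_n -> int) (P : 'I_n -> option (K * K)) :=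
  foldr (fun i acc => ec_add (ec_mul (c i) (P i)) acc) None (enum 'I_n).

Definition independent_family (n : nat) (P : 'I_n -> option (K * K)) : Prop :=
  (forall i, on_curve (P i)) /\
  (forall c : 'I_n -> int, ec_lincomb c P = None -> forall i, c i = 0).

(* rank E_d(K) >= n  (the rank is the supremum of such n). *)
Definition rank_ge (n : nat) : Prop :=
  exists P : 'I_n -> option (K * K), independent_family P.

End WeierstrassE.

(* Main.v *)
Require Import Defs.
From HB Require Import structures.
From mathcomp Require Import all_boot all_order all_algebra all_field.
From mathcomp Require Import fraction generic_quotient.
From mathcomp Require Import ring.
Set Implicit Arguments. Unset Strict Implicit. Unset Printing Implicit Defensive.
Import GRing.Theory.
Local Open Scope ring_scope.

Local Open Scope quotient_scope.

Section Frac.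
Variable R : idomainType.
Local Notation K := {fraction R}.
Local Notation tf := (@FracField.tofrac R).

Lemma pi_frac (r : {ratio R}) :
  (\pi_K r) = tf (\n_r) / tf (\d_r).
Proof.
have hd := denom_ratioP r.
apply: (@mulIf _ (tf \d_r)); first by rewrite tofrac_eq0.
rewrite mulfVK ?tofrac_eq0 //.
unlock FracField.tofrac.
rewrite -[_ * _]FracField.pi_mul. apply/eqmodP.
rewrite /= FracField.equivfE /FracField.mulf !numden_Ratio ?mulf_neq0 ?oner_neq0 //.
by rewrite mulr1 mulr1 mulrC.
Qed.

Lemma repr_frac (x : K) : x = tf (\n_(repr x)) / tf (\d_(repr x)).
Proof. by rewrite -pi_frac reprK. Qed.

Variable L : fieldType.
Variable g : {rmorphism R -> L}.
Hypothesis ginj : injective g.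

Definition phi (x : K) : L := g (\n_(repr x)) / g (\d_(repr x)).

Lemma g_neq0 b : b != 0 -> g b != 0.
Proof. by move=> hb; apply: contra hb => /eqP; rewrite -(rmorph0 g) => /ginj ->. Qed.

Lemma phi_frac a b : b != 0 -> phi (tf a / tf b) = g a / g b.
Proof.
move=> hb.
rewrite /phi; set x := tf a / tf b.
have hd := denom_ratioP (repr x).
have e := repr_frac x.
set n := \n_(repr x) in e *; set d := \d_(repr x) in hd e *.
have hbf : tf b != 0 by rewrite tofrac_eq0.
have hdf : tf d != 0 by rewrite tofrac_eq0.
have : tf (n * b) = tf (a * d).
  rewrite !rmorphM /=.
  have := congr1 (fun y => y * tf b * tf d) e.
  rewrite /x mulfVK // => ->. by rewrite mulrAC mulfVK.
move/eqP; rewrite tofrac_eq => /eqP /(congr1 g); rewrite !rmorphM /= => h.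
have gb := g_neq0 hb; have gd := g_neq0 hd.
by apply/eqP; rewrite eqr_div // h.
Qed.

Lemma fracP (x : K) : exists a b, b != 0 /\ x = tf a / tf b.
Proof. exists (\n_(repr x)), (\d_(repr x)); split; [exact: denom_ratioP| exact: repr_frac]. Qed.

Lemma fracB (K : fieldType) (a b c e : K) : b != 0 -> e != 0 ->
  a / b - c / e = (a * e - c * b) / (b * e).
Proof. move=> hb he. field. by rewrite he hb. Qed.
Lemma fracM (K : fieldType) (a b c e : K) :
  a / b * (c / e) = (a * c) / (b * e).
Proof. by rewrite invfM mulrACA. Qed.

Lemma phiB : zmod_morphism phi.
Proof.
move=> x y.
have [a [b [hb ->]]] := fracP x; have [c [e [he ->]]] := fracP y.
have hbf : tf b != 0 by rewrite tofrac_eq0.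
have hef : tf e != 0 by rewrite tofrac_eq0.
have gb := g_neq0 hb; have ge := g_neq0 he.
rewrite fracB // -!rmorphM -rmorphB.
by rewrite !phi_frac ?mulf_neq0 // rmorphB !rmorphM /= fracB.
Qed.

Lemma phiM : monoid_morphism phi.
Proof.
split.
  have -> : (1 : K) = tf 1 / tf 1 by rewrite rmorph1 divr1.
  by rewrite phi_frac ?oner_neq0 // rmorph1 divr1.
move=> x y.
have [a [b [hb ->]]] := fracP x; have [c [e [he ->]]] := fracP y.
rewrite fracM -!rmorphM.
by rewrite !phi_frac ?mulf_neq0 // !rmorphM /= fracM.
Qed.

HB.instance Definition _ := GRing.isZmodMorphism.Build K L phi phiB.
HB.instance Definition _ := GRing.isMonoidMorphism.Build K L phi phiM.

Lemma phi_tf a : phi (tf a) = g a.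
Proof. have -> : tf a = tf a / tf 1 by rewrite rmorph1 divr1.
by rewrite phi_frac ?oner_neq0 // rmorph1 divr1. Qed.
End Frac.


Section Base.
Variable F : fieldType.
Variable e : nat.
Hypothesis e_gt0 : (0 < e)%N.
Local Notation K := (ratfun F).
Local Notation tf := (@FracField.tofrac {poly F}).

Definition gX (p : {poly F}) : K := tf (p \Po 'X^e).

Lemma gXE p : gX p = tf (p \Po 'X^e). Proof. by []. Qed.

Lemma gXB : zmod_morphism gX.
Proof. by move=> p q; rewrite /gX comp_polyB rmorphB. Qed.
Lemma gXM : monoid_morphism gX.
Proof. split; first by rewrite /gX comp_polyC rmorph1.
by move=> p q; rewrite /gX comp_polyM rmorphM. Qed.
HB.instance Definition _ := GRing.isZmodMorphism.Build {poly F} K gX gXB.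
HB.instance Definition _ := GRing.isMonoidMorphism.Build {poly F} K gX gXM.

Lemma gX_inj : injective gX.
Proof.
move=> p q /eqP; rewrite /gX tofrac_eq -subr_eq0 -comp_polyB comp_poly_eq0.
  by rewrite subr_eq0 => /eqP.
by rewrite size_polyXn ltnS.
Qed.

Definition Phi : K -> K := phi gX.
HB.instance Definition _ := GRing.isZmodMorphism.Build K K Phi (phiB gX_inj).
HB.instance Definition _ := GRing.isMonoidMorphism.Build K K Phi (phiM gX_inj).

Lemma Phi_t : Phi (tvar F) = tvar F ^+ e.
Proof. rewrite /Phi /tvar phi_tf; last exact: gX_inj. transitivity (tf ('X^e : {poly F})); last by rewrite rmorphXn.
exact: (congr1 tf (comp_polyX ('X^e : {poly F}))). Qed.

Variable f : nat.

Lemma Phi_a6 : Phi (a6 F f) = a6 F (e * f).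
Proof. by rewrite /a6 rmorphN rmorphXn /= Phi_t exprM. Qed.

Definition mp (P : option (K * K)) : option (K * K) :=
  omap (fun xy => (Phi xy.1, Phi xy.2)) P.

Lemma mp_neg P : mp (ec_neg P) = ec_neg (mp P).
Proof. by case: P => [[x y]|] //=; rewrite rmorphB rmorphN. Qed.

Lemma mp_add P Q : mp (ec_add (F:=F) f P Q) = ec_add (F:=F) (e * f) (mp P) (mp Q).
Proof.
case: P => [[x1 y1]|] //; case: Q => [[x2 y2]|] //=.
have E1 : (Phi x1 == Phi x2) = (x1 == x2) := fmorph_eq _ _ _.
have E2 : (Phi y1 + Phi y2 + Phi x2 == 0) = (y1 + y2 + x2 == 0).
  by rewrite -!rmorphD fmorph_eq0.
rewrite E1 E2.
case: ifP => _ //=.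
case: ifP => _ /=; congr (Some (_, _)).
all: rewrite -?Phi_a6 ?(rmorphXn, rmorphB, rmorphD, rmorphN, rmorphM, fmorphV, rmorph_nat, rmorph1) //.
Qed.

Lemma mp_mul n P : mp (ec_mul (F:=F) f n P) = ec_mul (F:=F) (e * f) n (mp P).
Proof.
have H m : mp (iter m (ec_add (F:=F) f P) None) = iter m (ec_add (F:=F) (e * f) (mp P)) None.
  by elim: m => [|m IH] //=; rewrite mp_add IH.
case: n => m; first exact: H.
transitivity (ec_neg (mp (iter m.+1 (ec_add (F:=F) f P) None))); first exact: mp_neg.
by rewrite H.
Qed.

Lemma mp_lincomb n (c : 'I_n -> int) P :
  mp (ec_lincomb f c P) = ec_lincomb (e * f) c (fun i => mp (P i)).
Proof.
rewrite /ec_lincomb; elim: (enum 'I_n) => [|i s IH] //=.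
by rewrite mp_add IH mp_mul.
Qed.

Lemma mp_on_curve P : on_curve f P -> on_curve (e * f) (mp P).
Proof.
case: P => [[x y]|] //= H.
rewrite -Phi_a6.
move: H => /(congr1 Phi).
by rewrite !(rmorphD, rmorphXn, rmorphM).
Qed.

End Base.


Lemma main_gen (F : fieldType) (e f n : nat) (he : (0 < e)%N) :
  rank_ge F f n -> rank_ge F (e * f) n.
Proof.
move=> [P [Hc Hi]].
exists (fun i => mp e (P i)); split.
  by move=> i; apply: mp_on_curve.
move=> c Hc0 i; apply: Hi.
move: Hc0; rewrite -(mp_lincomb he).
by case: (ec_lincomb f c P).
Qed.

Theorem lemma6 (F : finFieldType) (f d : nat) :
  (0 < f)%N -> (0 < d)%N -> (f %| d)%N ->
  forall n : nat, rank_ge F f n -> rank_ge F d n.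
Proof.
move=> hf hd hfd n H.
have he : (0 < d %/ f)%N by rewrite divn_gt0 // dvdn_leq.
rewrite -(divnK hfd).
exact: main_gen.
Qed.
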